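(* Define $\rho:Q^4\to Q^4$ by $\rho(l)=l^{\perp}$, where $l$ is a projective line of $\mathbb{CP}^3$ and $l^\perp$ is its orthogonal with respect to $h$. Then $\{\rho,Q^4\}$ is a real structure. Its real set is a real quadric of signature $(2,4)$ and corresponds to the set of two-spheres contained in $S^3$ together with the points of $S^3$.
   Context: $\mathbb{H}$ denotes the quaternions, $\mathbb{H}=\mathbb{C}\oplus j\mathbb{C}$ with $\mathbb{C}=\mathrm{span}_{\mathbb{R}}\{1,i\}$; $\mathbb{H}^2$ is a right $\mathbb{H}$-vector space identified with $\mathbb{C}^4$; $\mathbb{HP}^1=\{v\mathbb{H}\}\cong S^4$, $\mathbb{CP}^3=\mathbb{P}(\mathbb{C}^4)$; the twistor fibre over $v\mathbb{H}$ is the projective line through $[v],[vj]$. $Q^4=\{[\alpha]\in\mathbb{P}(\Lambda^2\mathbb{C}^4):\alpha\wedge\alpha=0\}$, with $[v\wedge w]$ identified with the line of $\mathbb{CP}^3$ through $[v],[w]$; each such line is either a twistor fibre (a point of $S^4$) or the twistor lift of a round two-sphere with conformal structure. Fix an $\mathbb{H}$-basis $e_1,e_2$ of $\mathbb{H}^2$ and the quaternionic hermitian form $\mathfrak{h}(e_1a+e_2b,e_1c+e_2d)=\bar a d+\bar b c$ (matrix $\begin{pmatrix}0&1\\1&0\end{pmatrix}$); write $\mathfrak{h}=h+j\omega$ with $h,\omega$ $\mathbb{C}$-valued. Then $h$ is a hermitian form of signature $(2,2)$ on $\mathbb{C}^4$ and $\omega$ is an alternating complex bilinear form. $S^3=\{x\mathbb{H}:\mathfrak{h}(x,x)=0\}\subset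 S^4$ (in the chart $\{[e_1x+e_2]\}$ this is $\mathrm{Im}\,\mathbb{H}\cup\{\infty\}$). For a projective line $l$, $l^\perp=\mathbb{P}\{x\in\mathbb{C}^4:h(x,y)=0\ \forall y\in l\}$, again a projective line. A real structure on a complex manifold is an antiholomorphic involution; its real set is its fixed point set. *)

(* Defs.v *)
From HB Require Import structures.
From mathcomp Require Import all_boot all_order all_algebra.
From mathcomp Require Import reals.
From mathcomp Require Export complex.
Set Implicit Arguments. Unset Strict Implicit. Unset Printing Implicit Defensive.
Import Order.TTheory GRing.Theory Num.Theory.
Local Open Scope ring_scope.

Section Twistor.
Variable R : rcfType.
Local Notation C := R[i].

(* ---------- Quaternions  H = C (+) jC :  (z, w) represents z + j w ---------- *)
Record quat := Quat { qz : C; qw : C }.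

Definition qadd (p q : quat) : quat := Quat (qz p + qz q) (qw p + qw q).
(* (z1 + j w1)(z2 + j w2) = (z1 z2 - conj(w1) w2) + j (conj(z1) w2 + w1 z2),
   using  z j = j conj(z)  and  j^2 = -1 *)
Definition qmul (p q : quat) : quat :=
  Quat (qz p * qz q - conjc (qw p) * qw q) (conjc (qz p) * qw q + qw p * qz q).
Definition qconj (p : quat) : quat := Quat (conjc (qz p)) (- qw p).
Definition qj : quat := Quat 0 1.
Definition qzero : quat := Quat 0 0.

Definition o4 (n : nat) : 'I_4 := inord n.
(* v = e1 a + e2 b,  a = v0 + j v1,  b = v2 + j v3 *)
Definition qa (v : 'rV[C]_4) : quat := Quat (v 0 (o4 0)) (v 0 (o4 1)).
Definition qb (v : 'rV[C]_4) : quat := Quat (v 0 (o4 2)) (v 0 (o4 3)).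
Definition of_H2 (a b : quat) : 'rV[C]_4 :=
  \row_(k < 4) (if (k : nat) == 0%N then qz a else if (k : nat) == 1%N then qw a
                else if (k : nat) == 2%N then qz b else qw b).

Definition rmulj (v : 'rV[C]_4) : 'rV[C]_4 := of_H2 (qmul (qa v) qj) (qmul (qb v) qj).

Definition hq (x y : 'rV[C]_4) : quat :=
  qadd (qmul (qconj (qa x)) (qb y)) (qmul (qconj (qb x)) (qa y)).
(* h = C-component of hq (hq = h + j omega) *)
Definition hform (x y : 'rV[C]_4) : C := qz (hq x y).

(* the point vH of S^4 lies in S^3 *)
Definition inS3 (v : 'rV[C]_4) : Prop := hq v v = qzero.

(* a line is the row space of L : 'M_(2,4) with \rank L = 2 *)
Definition twistor_fibre (L : 'M[C]_(2,4)) : Prop :=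
  forall v : 'rV[C]_4, (v <= L)%MS -> (rmulj v <= L)%MS.

Definition is_perp (L M : 'M[C]_(2,4)) : Prop :=
  forall y : 'rV[C]_4, (y <= M)%MS <-> (forall x : 'rV[C]_4, (x <= L)%MS -> hform x y = 0).

(* ---------- Lambda^2 C^4 = C^6, basis e01,e02,e03,e12,e13,e23 ---------- *)
Definition pi1 (k : 'I_6) : 'I_4 := o4 (nth 0%N [:: 0; 0; 0; 1; 1; 2]%N k).
Definition pi2 (k : 'I_6) : 'I_4 := o4 (nth 0%N [:: 1; 2; 3; 2; 3; 3]%N k).
Definition o6 (n : nat) : 'I_6 := inord n.

(* Pluecker vector v /\ w of the rows v = L_0, w = L_1 *)
Definition pl (L : 'M[C]_(2,4)) : 'rV[C]_6 :=
  \row_(k < 6) (L 0 (pi1 k) * L 1 (pi2 k) - L 0 (pi2 k) * L 1 (pi1 k)).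

(* alpha /\ alpha = 2 * klein alpha * e0123 *)
Definition klein (a : 'rV[C]_6) : C :=
  a 0 (o6 0) * a 0 (o6 5) - a 0 (o6 1) * a 0 (o6 4) + a 0 (o6 2) * a 0 (o6 3).

Definition inQ4 (a : 'rV[C]_6) : Prop := a != 0 /\ klein a = 0.

Definition proj_eq (a b : 'rV[C]_6) : Prop := exists c : C, c != 0 /\ b = c *: a.

(* graph of rho : [a] = [v /\ w] (line l)  |->  [b] = l^perp *)
Definition rho (a b : 'rV[C]_6) : Prop :=
  exists L M : 'M[C]_(2,4), [/\ \rank L = 2%N, \rank M = 2%N, proj_eq (pl L) a,
                               is_perp L M & proj_eq (pl M) b].

Definition antilinear (s : 'rV[C]_6 -> 'rV[C]_6) : Prop :=
  forall (c : C) (x y : 'rV[C]_6), s (c *: x + y) = conjc c *: s x + s y.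

Definition sig24 (x : 'I_6 -> R) : R :=
  x (o6 0) ^+ 2 + x (o6 1) ^+ 2 - x (o6 2) ^+ 2 - x (o6 3) ^+ 2 - x (o6 4) ^+ 2 - x (o6 5) ^+ 2.

Definition rC (x : R) : C := (x%:C)%C.

End Twistor.

(* Main.v *)
Require Import Defs.
From HB Require Import structures.
From mathcomp Require Import all_boot all_order all_algebra.
From mathcomp Require Import reals complex ring.
Set Implicit Arguments. Unset Strict Implicit. Unset Printing Implicit Defensive.
Import Order.TTheory GRing.Theory Num.Theory.
Local Open Scope ring_scope.

Section S.
Variable R : realType.
Local Notation C := R[i].

Lemma o4K n : (n < 4)%N -> nat_of_ord (o4 n) = n.
Proof. by move=> h; rewrite /o4 inordK. Qed.
Lemma o6K n : (n < 6)%N -> nat_of_ord (o6 n) = n.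
Proof. by move=> h; rewrite /o6 inordK. Qed.

Lemma ord4E (i : 'I_4) : [\/ i = o4 0, i = o4 1, i = o4 2 | i = o4 3].
Proof.
case: i => [[|[|[|[|n]]]] h]; try (by []);
 [constructor 1|constructor 2|constructor 3|constructor 4]; apply: val_inj; by rewrite /= o4K.
Qed.

Lemma ord6E (i : 'I_6) : i = o6 0 \/ i = o6 1 \/ i = o6 2 \/ i = o6 3 \/ i = o6 4 \/ i = o6 5.
Proof.
case: i => [[|[|[|[|[|[|n]]]]]] h]; try (by []);
 [left|right;left|right;right;left|do 3 right; left|do 4 right; left|do 5 right];
 apply: val_inj; by rewrite /= o6K.
Qed.

Lemma ord2E (i : 'I_2) : i = 0 \/ i = 1.
Proof. by case: i => [[|[|n]] h]; [left|right|]; try apply: val_inj. Qed.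

Lemma ord1E (i : 'I_1) : i = 0.
Proof. by case: i => [[|n] h]; try apply: val_inj. Qed.

Lemma sum2 (F : 'I_2 -> C) : \sum_(i < 2) F i = F 0 + F 1.
Proof. by rewrite big_ord_recl big_ord1; congr (_ + F _); apply: val_inj. Qed.

Lemma sum4 (F : 'I_4 -> C) : \sum_(i < 4) F i = F (o4 0) + F (o4 1) + F (o4 2) + F (o4 3).
Proof.
rewrite !big_ord_recr big_ord0 /= add0r.
by congr (F _ + F _ + F _ + F _); apply: val_inj; rewrite /= o4K.
Qed.

Lemma sum6 (F : 'I_6 -> C) : \sum_(i < 6) F i =
  F (o6 0) + F (o6 1) + F (o6 2) + F (o6 3) + F (o6 4) + F (o6 5).
Proof.
rewrite !big_ord_recr big_ord0 /= add0r.
by congr (F _ + F _ + F _ + F _ + F _ + F _); apply: val_inj; rewrite /= o6K.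
Qed.

Lemma o4_eq n m : (n < 4)%N -> (m < 4)%N -> (o4 n == o4 m) = (n == m).
Proof. by move=> hn hm; rewrite -val_eqE /= !o4K. Qed.
Lemma o6_eq n m : (n < 6)%N -> (m < 6)%N -> (o6 n == o6 m) = (n == m).
Proof. by move=> hn hm; rewrite -val_eqE /= !o6K. Qed.

Definition minor2 (L : 'M[C]_(2,4)) (j k : 'I_4) := L 0 j * L 1 k - L 0 k * L 1 j.

Lemma plE L k : pl L 0 k = minor2 L (pi1 k) (pi2 k).
Proof. by rewrite mxE. Qed.

Lemma pi1E n : (n < 6)%N -> pi1 (o6 n) = o4 (nth 0%N [:: 0; 0; 0; 1; 1; 2]%N n).
Proof. by move=> h; rewrite /pi1 o6K. Qed.
Lemma pi2E n : (n < 6)%N -> pi2 (o6 n) = o4 (nth 0%N [:: 1; 2; 3; 2; 3; 3]%N n).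
Proof. by move=> h; rewrite /pi2 o6K. Qed.

Lemma minor2_anti L j k : minor2 L j k = - minor2 L k j.
Proof. rewrite /minor2; ring. Qed.
Lemma minor2_diag L j : minor2 L j j = 0.
Proof. rewrite /minor2; ring. Qed.

Lemma minor_all (L L' : 'M[C]_(2,4)) c : pl L' = c *: pl L ->
  forall a b, minor2 L' a b = c * minor2 L a b.
Proof.
move=> h a b.
have e : forall n, (n < 6)%N -> minor2 L' (pi1 (o6 n)) (pi2 (o6 n)) = c * minor2 L (pi1 (o6 n)) (pi2 (o6 n)).
  by move=> n hn; rewrite -!plE h mxE.
have e0 := e 0%N erefl; have e1 := e 1%N erefl; have e2 := e 2%N erefl.
have e3 := e 3%N erefl; have e4 := e 4%N erefl; have e5 := e 5%N erefl.
rewrite !pi1E // !pi2E //= in e0 e1 e2 e3 e4 e5.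
case: (ord4E a) => ->; case: (ord4E b) => ->;
  rewrite ?minor2_diag ?mulr0 //; 
  first [ done | by rewrite (minor2_anti L') (minor2_anti L); 
      rewrite ?e0 ?e1 ?e2 ?e3 ?e4 ?e5 mulrN ].
Qed.


Lemma rank2_minor (L : 'M[C]_(2,4)) j k : minor2 L j k != 0 -> \rank L = 2%N.
Proof.
move=> hm.
have hjk : (k == j) = false.
  by apply/negbTE; apply: contraNneq hm => ->; rewrite minor2_diag.
set m := minor2 L j k.
pose B : 'M[C]_(4,2) := \matrix_(r, c) ((if r == j then (if c == 0 then L 1 k else - L 0 k)
   else if r == k then (if c == 0 then - L 1 j else L 0 j) else 0) / m).
suff : row_free L by move/eqP.
apply/row_freeP; exists B; apply/matrixP => i c.
rewrite !mxE (bigD1 j) //= (bigD1 k) ?hjk //= big1 ?addr0; last first.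
  by move=> r /andP [hr1 hr2]; rewrite mxE (negbTE hr1) (negbTE hr2) mul0r mulr0.
rewrite !mxE eqxx hjk.
have hm' : m != 0 by [].
case: (ord2E i) => ->; case: (ord2E c) => -> /=; rewrite ?eqxx /m /minor2 in hm' *; field => //.
Qed.

Lemma pl_ne0 (L : 'M[C]_(2,4)) : pl L != 0 -> \rank L = 2%N.
Proof.
move=> h; case: (pickP (fun k => pl L 0 k != 0)) => [k hk|hn].
  by apply: (@rank2_minor L (pi1 k) (pi2 k)); rewrite plE in hk.
by case/eqP: h; apply/rowP => k; rewrite [RHS]mxE; have := hn k => /negbFE/eqP ->.
Qed.

Lemma rank2_pl (L : 'M[C]_(2,4)) : \rank L = 2%N -> pl L != 0.
Proof.
move=> hr; apply/negP => /eqP h0.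
have hmin : forall a b, minor2 L a b = 0.
  by move=> a b; rewrite (@minor_all L L 0) ?mul0r // h0 scale0r.
have hf : row_free L by rewrite /row_free hr.
case: (pickP (fun j => L 0 j != 0)) => [j hj|hn].
  pose w : 'rV[C]_2 := \row_c (if c == 0 then - L 1 j else L 0 j).
  have : w *m L == 0.
    apply/eqP/rowP => l; rewrite !mxE sum2 !mxE /=.
    have := hmin j l; rewrite /minor2 => e; by rewrite -e; ring.
  rewrite mulmx_free_eq0 // => /eqP/rowP/(_ 1); rewrite !mxE /= => e.
  by rewrite e eqxx in hj.
pose w : 'rV[C]_2 := \row_c (if c == 0 then 1 else 0).
have : w *m L == 0.
  apply/eqP/rowP => l; rewrite !mxE sum2 !mxE /=.
  by have := hn l => /negbFE/eqP ->; rewrite mul1r mul0r addr0.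
by rewrite mulmx_free_eq0 // => /eqP/rowP/(_ 0); rewrite !mxE /= => /eqP; rewrite oner_eq0.
Qed.


Definition proj_eqC (a b : 'rV[C]_6) := proj_eq a b.

Lemma minor_mul (D : 'M[C]_2) (L : 'M[C]_(2,4)) a b :
  minor2 (D *m L) a b = (D 0 0 * D 1 1 - D 0 1 * D 1 0) * minor2 L a b.
Proof. rewrite /minor2 !mxE !sum2; ring. Qed.

Lemma pl_mul (D : 'M[C]_2) (L : 'M[C]_(2,4)) :
  pl (D *m L) = (D 0 0 * D 1 1 - D 0 1 * D 1 0) *: pl L.
Proof. by apply/rowP => k; rewrite plE [RHS]mxE plE minor_mul. Qed.

Lemma sub_pl (L L' : 'M[C]_(2,4)) : (L' <= L)%MS -> \rank L' = 2%N ->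
  proj_eq (pl L) (pl L').
Proof.
move=> /submxP [D ->] hr; exists (D 0 0 * D 1 1 - D 0 1 * D 1 0); split; last exact: pl_mul.
apply: contraTneq (rank2_pl hr) => e; by rewrite pl_mul e scale0r eqxx.
Qed.

Lemma key_lc (c rj rk rl sj sk sl uj uk ul vj vk vl : C) : c != 0 -> uj*vk - uk*vj != 0 ->
  rj*sk - rk*sj = c*(uj*vk-uk*vj) -> rj*sl - rl*sj = c*(uj*vl - ul*vj) ->
  rk*sl - rl*sk = c*(uk*vl-ul*vk) ->
  rl = (rj*vk - rk*vj)/(uj*vk-uk*vj) * ul + (uj*rk - uk*rj)/(uj*vk-uk*vj) * vl.
Proof.
move=> hc hm e1 e2 e3.
have h : c * ((uj*vk-uk*vj) * rl - (rj*vk - rk*vj) * ul - (uj*rk - uk*rj) * vl) = 0.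
  have -> : c * ((uj*vk-uk*vj) * rl - (rj*vk - rk*vj) * ul - (uj*rk - uk*rj) * vl) =
     rj * (c*(uk*vl-ul*vk)) - rk * (c*(uj*vl - ul*vj)) + rl * (c*(uj*vk-uk*vj)) by ring.
  rewrite -e1 -e2 -e3; ring.
move/eqP: h; rewrite mulf_eq0 (negbTE hc) /= => /eqP h.
apply/eqP; rewrite -subr_eq0; apply/eqP.
have -> : rl - ((rj * vk - rk * vj) / (uj * vk - uk * vj) * ul + (uj * rk - uk * rj) / (uj * vk - uk * vj) * vl)
  = ((uj*vk-uk*vj) * rl - (rj*vk - rk*vj) * ul - (uj*rk - uk*rj) * vl) / (uj*vk-uk*vj).
  by field.
by rewrite h mul0r.
Qed.

Lemma pl_sub (L L' : 'M[C]_(2,4)) : proj_eq (pl L) (pl L') -> \rank L = 2%N -> (L' <= L)%MS.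
Proof.
move=> [c [hc e]] hr.
have hm := minor_all e.
have [k hk] : exists k, pl L 0 k != 0.
  case: (pickP (fun k => pl L 0 k != 0)) => [k hk|hn]; first by exists k.
  by case/eqP: (rank2_pl hr); apply/rowP => k; rewrite [RHS]mxE; have := hn k => /negbFE/eqP ->.
rewrite plE in hk; set j1 := pi1 k in hk; set k1 := pi2 k in hk.
set m := minor2 L j1 k1 in hk.
apply/submxP.
exists (\matrix_(i, r) (if r == 0 then (L' i j1 * L 1 k1 - L' i k1 * L 1 j1) / m
                       else (L 0 j1 * L' i k1 - L 0 k1 * L' i j1) / m)).
apply/matrixP => i l; rewrite !mxE sum2 !mxE /=.
have e1 := hm j1 k1; have e2 := hm j1 l; have e3 := hm k1 l.
rewrite /minor2 in e1 e2 e3 hk; rewrite /m /minor2.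
have hk' : L 0 j1 * L 1 k1 - L 0 k1 * L 1 j1 != 0 by [].
case: (ord2E i) => ->.
  exact: (key_lc hc hk' e1 e2 e3).
apply: (@key_lc (- c) (L' 1 j1) (L' 1 k1) (L' 1 l) (L' 0 j1) (L' 0 k1) (L' 0 l)); rewrite ?oppr_eq0 //.
- by rewrite mulNr -e1; ring.
- by rewrite mulNr -e2; ring.
- by rewrite mulNr -e3; ring.
Qed.


Lemma hformE (x y : 'rV[C]_4) : hform x y =
  conjc (x 0 (o4 0)) * y 0 (o4 2) + conjc (x 0 (o4 1)) * y 0 (o4 3)
  + conjc (x 0 (o4 2)) * y 0 (o4 0) + conjc (x 0 (o4 3)) * y 0 (o4 1).
Proof. rewrite /hform /hq /= !rmorphN; ring. Qed.

Definition sig (b : 'I_4) : 'I_4 := o4 (nth 0%N [:: 2; 3; 0; 1]%N b).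

Definition Km (L : 'M[C]_(2,4)) : 'M[C]_(4,2) := \matrix_(b, i) conjc (L i (sig b)).

Lemma hform_K (L : 'M[C]_(2,4)) y i : hform (row i L) y = (y *m Km L) 0 i.
Proof. rewrite hformE !mxE sum4 !mxE /sig !o4K //=; ring. Qed.

Lemma hform_comb (L : 'M[C]_(2,4)) (D : 'rV[C]_2) y :
  hform (D *m L) y = conjc (D 0 0) * hform (row 0 L) y + conjc (D 0 1) * hform (row 1 L) y.
Proof. rewrite !hformE !mxE !sum2 !rmorphD !rmorphM; ring. Qed.

Lemma perpK (L : 'M[C]_(2,4)) y :
  (forall x, (x <= L)%MS -> hform x y = 0) <-> (y <= kermx (Km L))%MS.
Proof.
rewrite sub_kermx; split.
  move=> h; apply/eqP/rowP => i; rewrite [RHS]mxE -hform_K; apply: h; exact: row_sub.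
move=> /eqP h x /submxP [D ->]; rewrite hform_comb !hform_K h !mxE; ring.
Qed.

Definition Pm : 'M[C]_4 := \matrix_(a, b) ((a == sig b)%:R).

Lemma Km_tr (L : 'M[C]_(2,4)) : (Km L)^T = map_mx conjc L *m Pm.
Proof.
apply/matrixP => i b; rewrite !mxE sum4 !mxE.
case: (ord4E b) => ->; rewrite /sig !o4K //= !o4_eq //=; ring.
Qed.

Lemma PmPm : Pm *m Pm = 1%:M.
Proof.
apply/matrixP => a b; rewrite !mxE sum4 !mxE.
case: (ord4E a) => ->; case: (ord4E b) => ->; rewrite /sig !o4K //= !o4_eq //=; ring.
Qed.

Lemma rank_Km (L : 'M[C]_(2,4)) : \rank (Km L) = \rank L.
Proof.
rewrite -mxrank_tr Km_tr mxrankMfree ?mxrank_map //.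
by apply/row_freeP; exists Pm; exact: PmPm.
Qed.

Lemma rank_ker (L : 'M[C]_(2,4)) : \rank L = 2%N -> \rank (kermx (Km L)) = 2%N.
Proof. by move=> h; rewrite mxrank_ker rank_Km h. Qed.


Definition pc (p : 'rV[C]_6) n := p 0 (o6 n).
Definition Pt (p : 'rV[C]_6) (l m : 'I_4) : C :=
  match nat_of_ord l, nat_of_ord m with
  | 0%N, 1%N => pc p 0 | 1%N, 0%N => - pc p 0
  | 0%N, 2%N => pc p 1 | 2%N, 0%N => - pc p 1
  | 0%N, 3%N => pc p 2 | 3%N, 0%N => - pc p 2
  | 1%N, 2%N => pc p 3 | 2%N, 1%N => - pc p 3
  | 1%N, 3%N => pc p 4 | 3%N, 1%N => - pc p 4
  | 2%N, 3%N => pc p 5 | 3%N, 2%N => - pc p 5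
  | _, _ => 0 end.

Definition decompk (p : 'rV[C]_6) (k : 'I_6) : 'M[C]_(2,4) :=
  \matrix_(r, m) (if r == 0 then - Pt p (pi2 k) m else Pt p (pi1 k) m).

Ltac kl p Hk := apply/eqP; rewrite -subr_eq0; apply/eqP;
  first [ ring
        | (transitivity (klein p); [rewrite /klein; ring | exact Hk])
        | (transitivity (- klein p); [rewrite /klein; ring | by rewrite Hk oppr0]) ].

Lemma decompk_pl p k : klein p = 0 -> pl (decompk p k) = p 0 k *: p.
Proof.
move=> hk; apply/rowP => t; rewrite plE [RHS]mxE /minor2 !mxE /=.
case: (ord6E k) => [->|[->|[->|[->|[->|->]]]]];
case: (ord6E t) => [->|[->|[->|[->|[->|->]]]]];
rewrite !pi1E // !pi2E //= /Pt !o4K //= /pc; kl p hk.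
Qed.


Lemma cM (a b : C) : conjc (a * b) = conjc a * conjc b. Proof. exact: rmorphM. Qed.
Lemma cD (a b : C) : conjc (a + b) = conjc a + conjc b. Proof. exact: rmorphD. Qed.
Lemma cB (a b : C) : conjc (a - b) = conjc a - conjc b. Proof. exact: rmorphB. Qed.
Lemma cN (a : C) : conjc (- a) = - conjc a. Proof. exact: rmorphN. Qed.
Lemma c1 : conjc (1 : C) = 1. Proof. exact: rmorph1. Qed.
Lemma c0 : conjc (0 : C) = 0. Proof. exact: rmorph0. Qed.
Lemma cK (a : C) : conjc (conjc a) = a. Proof. exact: conjcK. Qed.
Ltac csimp := rewrite ?(cM, cD, cB, cN, c1, c0, cK).

Definition sidx (k : 'I_6) : 'I_6 := o6 (nth 0%N [:: 0; 4; 2; 3; 1; 5]%N k).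
Definition ssgn (k : 'I_6) : C := if ((k : nat) == 2%N) || ((k : nat) == 3%N) then -1 else 1.
Definition s6 (p : 'rV[C]_6) : 'rV[C]_6 := \row_k (ssgn k * conjc (p 0 (sidx k))).

Lemma s6_anti : antilinear s6.
Proof. move=> c x y; apply/rowP => k; rewrite !mxE rmorphD rmorphM; ring. Qed.

Lemma s6Z c x : s6 (c *: x) = conjc c *: s6 x.
Proof. apply/rowP => k; rewrite !mxE rmorphM; ring. Qed.

Lemma s6K x : s6 (s6 x) = x.
Proof.
apply/rowP => k; rewrite !mxE.
case: (ord6E k) => [->|[->|[->|[->|[->|->]]]]]; rewrite /ssgn /sidx !o6K //= ?mxE ?o6K //= 
  ; csimp; ring.
Qed.

Lemma klein_s6 x : klein (s6 x) = conjc (klein x).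
Proof.
rewrite /klein !mxE /ssgn /sidx !o6K //=; csimp; ring.
Qed.

Lemma decomp_perp (L : 'M[C]_(2,4)) k : (decompk (s6 (pl L)) k <= kermx (Km L))%MS.
Proof.
rewrite sub_kermx; apply/eqP/matrixP => r i; rewrite !mxE sum4 !mxE.
case: (ord2E r) => ->; case: (ord2E i) => ->;
case: (ord6E k) => [->|[->|[->|[->|[->|->]]]]];
rewrite /= ?pi1E // ?pi2E //= /sig /Pt ?o4K //= /pc ?mxE /ssgn /sidx ?o6K //= 
  ?plE ?pi1E // ?pi2E //= /minor2; csimp; ring.
Qed.


Implicit Types a b d : 'rV[C]_6.
Lemma pe_refl a : proj_eq a a.
Proof. by exists 1; rewrite oner_eq0 scale1r. Qed.
Lemma pe_sym a b : proj_eq a b -> proj_eq b a.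
Proof.
move=> [c [hc ->]]; exists c^-1; split; first by rewrite invr_eq0.
by rewrite scalerA mulVf // scale1r.
Qed.
Lemma pe_trans a b d : proj_eq a b -> proj_eq b d -> proj_eq a d.
Proof.
move=> [c [hc ->]] [c' [hc' ->]]; exists (c' * c); split; first by rewrite mulf_neq0.
by rewrite scalerA.
Qed.
Lemma pe_s6 a b : proj_eq a b -> proj_eq (s6 a) (s6 b).
Proof.
move=> [c [hc ->]]; exists (conjc c); split; first by rewrite conjc_eq0.
by rewrite s6Z.
Qed.
Lemma kleinZ c a : klein (c *: a) = c ^+ 2 * klein a.
Proof. rewrite /klein !mxE; ring. Qed.
Lemma pe_inQ4 a b : proj_eq a b -> inQ4 a -> inQ4 b.
Proof.
move=> [c [hc ->]] [ha hk]; split; first by rewrite scaler_eq0 negb_or hc.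
by rewrite kleinZ hk mulr0.
Qed.

Lemma klein_pl (L : 'M[C]_(2,4)) : klein (pl L) = 0.
Proof. rewrite /klein !plE !pi1E // !pi2E //= /minor2; ring. Qed.

Lemma inQ4_pl (L : 'M[C]_(2,4)) : \rank L = 2%N -> inQ4 (pl L).
Proof. by move=> h; split; [exact: rank2_pl | exact: klein_pl]. Qed.

Lemma nz_coord (p : 'rV[C]_6) : p != 0 -> exists k, p 0 k != 0.
Proof.
move=> h; case: (pickP (fun k => p 0 k != 0)) => [k hk|hn]; first by exists k.
by case/eqP: h; apply/rowP => k; rewrite [RHS]mxE; have := hn k => /negbFE/eqP ->.
Qed.

Lemma decomp_ok (p : 'rV[C]_6) (k : 'I_6) : p 0 k != 0 -> klein p = 0 ->
  \rank (decompk p k) = 2%N /\ proj_eq p (pl (decompk p k)).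
Proof.
move=> hk hkl; have e := decompk_pl k hkl.
split; last by exists (p 0 k).
apply: pl_ne0; rewrite e scaler_eq0 negb_or hk /=.
by apply: contraNneq hk => ->; rewrite mxE.
Qed.

Lemma decomp_ex a : inQ4 a -> exists L : 'M[C]_(2,4), \rank L = 2%N /\ proj_eq (pl L) a.
Proof.
move=> [ha hk]; have [k hk'] := nz_coord ha.
have [h1 h2] := decomp_ok hk' hk; exists (decompk a k); split => //; exact: pe_sym.
Qed.

Lemma s6_eq0 (p : 'rV[C]_6) : (s6 p == 0) = (p == 0).
Proof.
apply/eqP/eqP => [h|->]; last by apply/rowP => k; rewrite !mxE c0 mulr0.
by rewrite -(s6K p) h; apply/rowP => k; rewrite !mxE c0 mulr0.
Qed.

Lemma perp_ex (L : 'M[C]_(2,4)) : \rank L = 2%N ->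
  exists M0, [/\ \rank M0 = 2%N, proj_eq (s6 (pl L)) (pl M0) & is_perp L M0].
Proof.
move=> hr; set q := s6 (pl L).
have hq : q != 0 by rewrite /q s6_eq0; exact: rank2_pl.
have hkq : klein q = 0 by rewrite /q klein_s6 klein_pl c0.
have [k hk] := nz_coord hq.
have [h1 h2] := decomp_ok hk hkq.
exists (decompk q k); split => // y.
have hs := decomp_perp L k.
have hle := mxrank_leqif_sup hs.
have hsup : (kermx (Km L) <= decompk q k)%MS.
  by rewrite -hle.2 h1 rank_ker.
rewrite perpK; split => hy; first exact: submx_trans hs.
exact: submx_trans hsup.
Qed.

Lemma perp_any (L M : 'M[C]_(2,4)) : \rank L = 2%N -> \rank M = 2%N -> is_perp L M ->
  proj_eq (s6 (pl L)) (pl M).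
Proof.
move=> hL hM hp; have [M0 [h1 h2 h3]] := perp_ex hL.
apply: (pe_trans h2); apply: sub_pl => //.
apply/row_subP => i; apply/h3; apply/hp; exact: row_sub.
Qed.

Lemma rhoE a b : rho a b <-> inQ4 a /\ proj_eq (s6 a) b.
Proof.
split.
  move=> [L [M [hL hM h1 hp h2]]]; split; first exact: pe_inQ4 (inQ4_pl hL).
  apply: (pe_trans (pe_sym (pe_s6 h1))); apply: pe_trans h2; exact: perp_any.
move=> [ha hb]; have [L [hL e]] := decomp_ex ha.
have [M0 [h1 h2 h3]] := perp_ex hL.
exists L, M0; split => //.
apply: pe_trans hb; apply: pe_trans (pe_sym h2) _; exact: pe_s6.
Qed.


Local Notation I := ('i%C : C).
Arguments conjc : simpl never.
Arguments real_complex_def : simpl never.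

Definition Et (k t : nat) : C :=
  match k, t with
  | 0%N, 0%N => 1 | 0%N, 5%N => 1 | 1%N, 2%N => I | 1%N, 3%N => - I
  | 2%N, 0%N => 1 | 2%N, 5%N => -1 | 3%N, 2%N => I | 3%N, 3%N => I
  | 4%N, 1%N => 1 | 4%N, 4%N => 1 | 5%N, 1%N => I | 5%N, 4%N => - I
  | _, _ => 0 end.

Definition ebas (k : 'I_6) : 'rV[C]_6 := \row_t Et k t.

Definition sv (x : 'I_6 -> R) : 'rV[C]_6 :=
  let y n := rC (x (o6 n)) in
  \row_t (match nat_of_ord t with
          | 0%N => y 0%N + y 2%N | 1%N => y 4%N + I * y 5%N
          | 2%N => I * y 1%N + I * y 3%N | 3%N => - I * y 1%N + I * y 3%N
          | 4%N => y 4%N - I * y 5%N | _ => y 0%N - y 2%N end).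

Lemma sum_sv (x : 'I_6 -> R) : \sum_(k < 6) rC (x k) *: ebas k = sv x.
Proof.
apply/rowP => t; rewrite summxE sum6 !mxE !o6K //.
case: (ord6E t) => [->|[->|[->|[->|[->|->]]]]]; rewrite !o6K //=; ring.
Qed.

Lemma conj_i : conjc I = - I.
Proof. by apply/eqP; rewrite eq_complex /= oppr0 !eqxx. Qed.
Lemma conj_rC (r : R) : conjc (rC r) = rC r.
Proof. exact: conjc_real. Qed.
Lemma ii : I * I = -1.
Proof. by rewrite -expr2 sqr_i. Qed.

Lemma s6_sv (x : 'I_6 -> R) : s6 (sv x) = sv x.
Proof.
apply/rowP => t; rewrite !mxE.
case: (ord6E t) => [->|[->|[->|[->|[->|->]]]]];
  rewrite /ssgn /sidx !o6K //= ?mxE ?o6K //=; csimp; rewrite ?conj_i ?conj_rC; ring.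
Qed.

Lemma rC_sig (x : 'I_6 -> R) : rC (sig24 x) = rC (x (o6 0)) ^+ 2 + rC (x (o6 1)) ^+ 2 - rC (x (o6 2)) ^+ 2
   - rC (x (o6 3)) ^+ 2 - rC (x (o6 4)) ^+ 2 - rC (x (o6 5)) ^+ 2.
Proof. by rewrite /sig24 /rC !rmorphB !rmorphD !rmorphXn. Qed.

Lemma klein_sv (x : 'I_6 -> R) : klein (sv x) = rC (sig24 x).
Proof.
rewrite rC_sig /klein !mxE !o6K //=.
set y0 := rC (x (o6 0)); set y1 := rC (x (o6 1)); set y2 := rC (x (o6 2)).
set y3 := rC (x (o6 3)); set y4 := rC (x (o6 4)); set y5 := rC (x (o6 5)).
apply/eqP; rewrite -subr_eq0; apply/eqP.
transitivity ((I * I + 1) * (y5 ^+ 2 - y1 ^+ 2 + y3 ^+ 2)); first ring.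
by rewrite ii addNr mul0r.
Qed.


Lemma lin2 (a b : C) : a + b = 0 -> a - b = 0 -> a = 0 /\ b = 0.
Proof.
move=> h1 h2.
have h2n : (2 : C) != 0 by rewrite pnatr_eq0.
have ea : a = ((a + b) + (a - b)) / 2 by field.
have eb : b = ((a + b) - (a - b)) / 2 by field.
by split; [rewrite ea | rewrite eb]; rewrite h1 h2 ?subr0 ?addr0 mul0r.
Qed.

Lemma I_neq0 : I != 0.
Proof. by apply/eqP => /eqP; rewrite eq_complex /= oner_eq0 andbF. Qed.

Lemma rank_E : \rank (\matrix_(k < 6) ebas k) = 6%N.
Proof.
suff : row_free (\matrix_(k < 6) ebas k) by move/eqP.
apply: inj_row_free => w hw.
have e t : (w *m \matrix_(k < 6) ebas k) 0 t = 0 by rewrite hw mxE.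
have e0 := e (o6 0); have e1 := e (o6 1); have e2 := e (o6 2).
have e3 := e (o6 3); have e4 := e (o6 4); have e5 := e (o6 5).
move: e0 e1 e2 e3 e4 e5; rewrite !mxE !sum6 !mxE !o6K //= ?mulr0 ?mulr1 ?addr0 ?add0r => e0 e1 e2 e3 e4 e5.
rewrite mulrN1 in e5.
have [h0 h2] := lin2 e0 e5.
have e4' : w 0 (o6 4) - w 0 (o6 5) * I = 0 by rewrite -e4; ring.
have [h4 h5'] := lin2 e1 e4'.
have h5 : w 0 (o6 5) = 0.
  by move/eqP: h5'; rewrite mulf_eq0 (negbTE I_neq0) orbF => /eqP.
have e2' : w 0 (o6 3) + w 0 (o6 1) = 0.
  by apply: (mulIf I_neq0); rewrite mul0r -e2; ring.
have e3' : w 0 (o6 3) - w 0 (o6 1) = 0.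
  by apply: (mulIf I_neq0); rewrite mul0r -e3; ring.
have [h3 h1] := lin2 e2' e3'.
apply/rowP => k; rewrite [RHS]mxE.
by case: (ord6E k) => [->|[->|[->|[->|[->|->]]]]].
Qed.


Lemma rCD (u v : R) : rC (u + v) = rC u + rC v.
Proof. exact: rmorphD. Qed.
Lemma rCB (u v : R) : rC (u - v) = rC u - rC v.
Proof. exact: rmorphB. Qed.

Lemma real_of_fix (z : C) : conjc z = z -> z = rC (complex.Re z).
Proof.
move=> h; rewrite {1}[z]complexE.
have : (complex.Im z)%:C%C = 0 by rewrite ImJ_sub h subrr !mul0r.
by move=> ->; rewrite mulr0 addr0.
Qed.

Lemma imag_of_fix (z : C) : - conjc z = z -> z = I * rC (complex.Im z).
Proof.
move=> h; rewrite {1}[z]complexE.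
have : (complex.Re z)%:C%C = 0 by rewrite ReJ_add -{1}h addNr mul0r.
by move=> ->; rewrite add0r.
Qed.

Lemma conj_decomp (z : C) : conjc z = rC (complex.Re z) - I * rC (complex.Im z).
Proof. rewrite {1}[z]complexE; csimp; rewrite conj_i !conj_rC /rC; ring. Qed.

Definition xof (b : 'rV[C]_6) (k : 'I_6) : R :=
  let r n := complex.Re (b 0 (o6 n)) in let m n := complex.Im (b 0 (o6 n)) in
  match nat_of_ord k with
  | 0%N => (r 0%N + r 5%N) / 2 | 1%N => (m 2%N - m 3%N) / 2
  | 2%N => (r 0%N - r 5%N) / 2 | 3%N => (m 2%N + m 3%N) / 2
  | 4%N => r 1%N | _ => m 1%N end.

Lemma fixed_sv b : s6 b = b -> sv (xof b) = b.
Proof.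
move=> hb.
have f t : (s6 b) 0 t = b 0 t by rewrite hb.
have f0 := f (o6 0); have f2 := f (o6 2); have f3 := f (o6 3).
have f4 := f (o6 4); have f5 := f (o6 5).
rewrite !mxE /ssgn /sidx !o6K //= ?mul1r ?mulN1r in f0 f2 f3 f4 f5.
have h2R : (2 : R) != 0 by rewrite pnatr_eq0.
apply/rowP => t; rewrite mxE /xof.
case: (ord6E t) => [->|[->|[->|[->|[->|->]]]]]; rewrite !o6K //=.
- rewrite [RHS](real_of_fix f0) -rCD; congr rC; field=> //.
- by rewrite [RHS]complexE.
- rewrite [RHS](imag_of_fix f2) -mulrDr -rCD; congr (_ * rC _); field=> //.
- rewrite [RHS](imag_of_fix f3) mulNr addrC -mulrBr -rCB; congr (_ * rC _); field=> //.
- by rewrite -f4 conj_decomp.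
- rewrite [RHS](real_of_fix f5) -rCB; congr rC; field=> //.
Qed.


Lemma realset (a : 'rV[C]_6) : inQ4 a ->
  (proj_eq (s6 a) a <-> exists x : 'I_6 -> R,
      (exists k, x k != 0) /\ proj_eq (\sum_(k < 6) rC (x k) *: ebas k) a).
Proof.
move=> [ha hka]; split; last first.
  move=> [x [_ [c [hc ->]]]]; rewrite sum_sv.
  have hcc : conjc c != 0 by rewrite conjc_eq0.
  exists (c / conjc c); split; first by rewrite mulf_neq0 // invr_eq0.
  by rewrite s6Z s6_sv scalerA mulfVK.
move=> [c [hc ea]].
set l := conjc c.
have hs : s6 a = l *: a by rewrite {1}ea s6Z s6K.
have hcl : c * l = 1.
  have : (c * l - 1) *: a = 0.
    by rewrite scalerBl scale1r -scalerA -hs -ea subrr.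
  by move/eqP; rewrite scaler_eq0 (negbTE ha) orbF subr_eq0 => /eqP.
have hll : conjc l * l = 1 by rewrite /l cK.
pose mu := if l == -1 then I else 1 + l.
have [hmu hmu2] : mu != 0 /\ conjc mu * l = mu.
  rewrite /mu; have [hl|hn] := eqVneq l (-1).
    rewrite hl; split; [exact: I_neq0 | rewrite conj_i; ring].
  rewrite ?(negbTE hn); split; last by csimp; rewrite mulrDl ?hll ?hcl mul1r addrC.
  apply: contra hn => /eqP h; rewrite -subr_eq0 opprK addrC h.
  done.
set b := mu *: a.
have hb : s6 b = b by rewrite /b s6Z hs scalerA hmu2.
exists (xof b); split.
  case: (pickP (fun k => xof b k != 0)) => [k hk|hn]; first by exists k.
  have : b = 0.
    rewrite -(fixed_sv hb); apply/rowP => t; rewrite !mxE.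
    have z n : rC (xof b (o6 n)) = 0.
      by have := hn (o6 n) => /negbFE/eqP ->; rewrite /rC rmorph0.
    by case: (nat_of_ord t) => [|[|[|[|[|?]]]]]; rewrite !z ?mulr0 ?addr0 ?subr0.
  by move/eqP; rewrite /b scaler_eq0 (negbTE hmu) (negbTE ha).
rewrite sum_sv (fixed_sv hb); exists mu^-1; split; first by rewrite invr_eq0.
by rewrite /b scalerA mulVf // scale1r.
Qed.

Lemma hq_diag (v : 'rV[C]_4) : hq v v = Quat (hform v v) 0.
Proof.
have : qw (hq v v) = 0 by rewrite /hq /=; csimp; ring.
by rewrite /hform; case: (hq v v) => z w /= ->.
Qed.

Lemma inS3E (v : 'rV[C]_4) : inS3 v <-> hform v v = 0.
Proof.
rewrite /inS3 hq_diag; split; first by case.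
by move=> ->.
Qed.

Lemma hform_pol1 (x y : 'rV[C]_4) :
  hform (x + y) (x + y) = hform x x + hform y y + hform x y + hform y x.
Proof. rewrite !hformE !mxE; csimp; ring. Qed.

Lemma hform_pol2 (x y : 'rV[C]_4) :
  hform (x + I *: y) (x + I *: y) =
  hform x x + (- I * I) * hform y y + I * hform x y - I * hform y x.
Proof. rewrite !hformE !mxE; csimp; rewrite conj_i; ring. Qed.

Lemma polar (L : 'M[C]_(2,4)) : (forall v, (v <= L)%MS -> hform v v = 0) ->
  forall x y, (x <= L)%MS -> (y <= L)%MS -> hform x y = 0.
Proof.
move=> h x y hx hy.
have e1 := hform_pol1 x y; have e2 := hform_pol2 x y.
rewrite !h ?addmx_sub ?scalemx_sub // in e1 e2.
have s1 : hform x y + hform y x = 0 by rewrite e1; ring.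
have s2 : hform x y - hform y x = 0.
  apply: (mulfI I_neq0); rewrite mulr0 e2; ring.
by have [] := lin2 s1 s2.
Qed.

Lemma part7 (L : 'M[C]_(2,4)) : \rank L = 2%N ->
  (rho (pl L) (pl L) <-> forall v, (v <= L)%MS -> inS3 v).
Proof.
move=> hr; have [M0 [h1 h2 h3]] := perp_ex hr.
rewrite rhoE.
have step1 : proj_eq (s6 (pl L)) (pl L) <-> (L <= M0)%MS.
  split => H.
    by apply: pl_sub h1; exact: pe_trans (pe_sym h2) H.
  exact: pe_trans h2 (sub_pl H hr).
have step2 : (L <= M0)%MS <-> (forall v, (v <= L)%MS -> hform v v = 0).
  split => H.
    move=> v hv; apply: (proj1 (h3 v) (submx_trans hv H)); exact: hv.
  apply/row_subP => i; apply/(h3 _) => x hx; apply: (polar H hx); exact: row_sub.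
split.
  move=> [_ H] v hv; apply/inS3E; exact: (proj1 step2 (proj1 step1 H)).
move=> H; split; first exact: inQ4_pl.
apply/step1/step2 => v hv; apply/inS3E; exact: H.
Qed.


Lemma ebas_fix k : s6 (ebas k) = ebas k.
Proof.
apply/rowP => t; rewrite !mxE.
case: (ord6E k) => [->|[->|[->|[->|[->|->]]]]];
case: (ord6E t) => [->|[->|[->|[->|[->|->]]]]];
rewrite /ssgn /sidx !o6K //= ?mxE ?o6K //=; csimp; rewrite ?conj_i; ring.
Qed.

Lemma inQ4_s6 a : inQ4 a -> inQ4 (s6 a).
Proof. by move=> [h1 h2]; split; [rewrite s6_eq0 | rewrite klein_s6 h2 c0]. Qed.

End S.

From Stdlib Require Import Classical.

Theorem mainTheorem6 (R : realType) :
  (* rho : Q^4 -> Q^4 is well defined *)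
  (forall L : 'M[R[i]]_(2,4), \rank L = 2%N ->
     exists M : 'M[R[i]]_(2,4), \rank M = 2%N /\ is_perp L M) /\
  (forall a : 'rV[R[i]]_6, inQ4 a -> exists b, rho a b) /\
  (forall a b : 'rV[R[i]]_6, rho a b -> inQ4 b) /\
  (forall a a' b b' : 'rV[R[i]]_6, rho a b -> rho a' b' -> proj_eq a a' -> proj_eq b b') /\
  (* rho is an involution *)
  (forall a b c : 'rV[R[i]]_6, rho a b -> rho b c -> proj_eq a c) /\
  (* rho is antiholomorphic: induced by an antilinear involution s of Lambda^2 C^4;
     its real set is the real quadric of signature (2,4) in the real form Fix(s) *)
  (exists s : 'rV[R[i]]_6 -> 'rV[R[i]]_6,
     [/\ antilinear s, (forall x, s (s x) = x), (forall a, inQ4 a -> rho a (s a)) &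
     exists (e : 'I_6 -> 'rV[R[i]]_6) (c : R[i]),
       [/\ c != 0, \rank (\matrix_(k < 6) e k) = 6%N, (forall k, s (e k) = e k),
           (forall x : 'I_6 -> R,
              klein (\sum_(k < 6) rC (x k) *: e k) = c * rC (sig24 x)) &
           (forall a, inQ4 a ->
              (rho a a <-> exists x : 'I_6 -> R,
                 (exists k, x k != 0) /\ proj_eq (\sum_(k < 6) rC (x k) *: e k) a))]]) /\
  (* fixed lines = points of S^3 (twistor fibres over S^3) and 2-spheres contained in S^3 *)
  (forall L : 'M[R[i]]_(2,4), \rank L = 2%N ->
     (rho (pl L) (pl L) <->
        ((twistor_fibre L /\ forall v : 'rV[R[i]]_4, (v <= L)%MS -> inS3 v) \/
         (~ twistor_fibre L /\ forall v : 'rV[R[i]]_4, (v <= L)%MS -> inS3 v)))).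
Proof.
split.
  move=> L hL; have [M0 [h1 _ h3]] := perp_ex hL; by exists M0.
split.
  move=> a ha; exists (s6 a); apply/rhoE; split => //; exact: pe_refl.
split.
  move=> a b /rhoE [ha hb]; exact: pe_inQ4 hb (inQ4_s6 ha).
split.
  move=> a a' b b' /rhoE [_ hb] /rhoE [_ hb'] haa'.
  exact: pe_trans (pe_sym hb) (pe_trans (pe_s6 haa') hb').
split.
  move=> a b c /rhoE [_ hb] /rhoE [_ hc].
  have := pe_s6 hb; rewrite s6K => h; exact: pe_trans h hc.
split.
  exists (@s6 R); split.
  - exact: s6_anti.
  - exact: s6K.
  - move=> a ha; apply/rhoE; split => //; exact: pe_refl.
  exists (@ebas R), 1; split.
  - exact: oner_neq0.
  - exact: rank_E.
  - exact: ebas_fix.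
  - by move=> x; rewrite sum_sv klein_sv mul1r.
  - move=> a ha; rewrite -(realset ha) rhoE; split; [by case | by move=> h; split].
move=> L hL; rewrite part7 //; split.
  move=> H; case: (classic (twistor_fibre L)) => ht; [left | right]; by split.
by case=> [[_ H]|[_ H]].
Qed.
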